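(* Let $\beta>0$, $\alpha\in(0,1)$ and $\rho>0$. Consider the planar system \[ \dot p=\rho\,(1-e^{p})-q,\qquad \dot q=-\beta\alpha\rho\,(1-e^{p}),\qquad (p,q)\in\mathbb{R}^2 . \] Then this system is globally stable, with all solutions tending to $(0,0)$ as $t\to\infty$.
   Context: This system arises from the single-agent resource–consumption model $\dot x=(1-x)x-xy$, $\dot y=\beta\alpha(x-\rho)$ via the change of variables $p=\ln x-\ln\rho$, $q=y-(1-\rho)$. *)

(* Defs.v *)
From Stdlib Require Import Reals.
From Coquelicot Require Import Coquelicot.
Open Scope R_scope.

Definition fp (rho p q : R) : R := rho * (1 - exp p) - q.
Definition fq (beta alpha rho p q : R) : R := - (beta * alpha * rho * (1 - exp p)).

Definition is_solution (beta alpha rho : R) (p q : R -> R) : Prop :=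
  (forall t, 0 < t ->
     is_derive p t (fp rho (p t) (q t)) /\
     is_derive q t (fq beta alpha rho (p t) (q t))) /\
  filterlim p (at_right 0) (locally (p 0)) /\
  filterlim q (at_right 0) (locally (q 0)).

Definition norm2 (x y : R) : R := sqrt (x ^ 2 + y ^ 2).

(* Main.v *)
Require Import Defs.
From Stdlib Require Import Reals Lra Psatz Classical.
From Coquelicot Require Import Coquelicot.
Open Scope R_scope.

Lemma ball_R (x e y : R) : ball x e y <-> Rabs (y - x) < e.
Proof. reflexivity. Qed.

Lemma mvt_pos (f df : R -> R) (s t : R) :
  (forall x, 0 < x -> is_derive f x (df x)) ->
  0 < s <= t -> exists c, s <= c <= t /\ f t - f s = df c * (t - s).
Proof.
  intros Hd Hst.
  destruct (MVT_gen f s t df) as [c [Hc Heq]].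
  - intros x Hx. apply Hd. rewrite Rmin_left in Hx by lra. lra.
  - intros x Hx. rewrite Rmin_left in Hx by lra. rewrite Rmax_right in Hx by lra.
    apply continuity_pt_filterlim. apply (ex_derive_continuous f x).
    exists (df x). apply Hd. lra.
  - rewrite Rmin_left in Hc by lra. rewrite Rmax_right in Hc by lra.
    exists c; split; auto.
Qed.

Lemma rc_small (f : R -> R) (t d : R) : 0 < t -> 0 < d -> forall C : R,
  filterlim f (at_right 0) (locally (f 0)) ->
  exists s', 0 < s' < t /\ Rabs (f s' - f 0) < d /\ Rabs C * s' < d.
Proof.
  intros Ht Hdp C Hc.
  pose proof (proj1 (filterlim_locally (F:=at_right 0) f (f 0)) Hc) as Hc0. clear Hc.
  destruct (Hc0 (mkposreal d Hdp)) as [[e He] Hl]. simpl in Hl.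
  set (s' := Rmin (e/2) (Rmin (t/2) (d/(2*(Rabs C + 1))))).
  pose proof (Rabs_pos C).
  assert (H1 : 0 < s').
  { unfold s'. repeat apply Rmin_pos; try lra. apply Rdiv_lt_0_compat; lra. }
  assert (H2 : s' <= e/2) by apply Rmin_l.
  assert (H3 : s' <= t/2) by (unfold s'; eapply Rle_trans; [apply Rmin_r| apply Rmin_l]).
  assert (H4 : s' <= d/(2*(Rabs C + 1))) by (unfold s'; eapply Rle_trans; [apply Rmin_r| apply Rmin_r]).
  assert (H5 : s' * (2*(Rabs C + 1)) <= d).
  { apply (Rmult_le_compat_r (2*(Rabs C + 1))) in H4; [|lra].
    field_simplify in H4; lra. }
  assert (Hball : ball 0 e s') by (apply ball_R; rewrite Rabs_right; lra).
  specialize (Hl s' Hball H1). apply ball_R in Hl.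
  exists s'. split; [lra|split; [exact Hl| nra]].
Qed.

Lemma mvt_sol_up (f df : R -> R) (M s t : R) :
  (forall x, 0 < x -> is_derive f x (df x)) ->
  filterlim f (at_right 0) (locally (f 0)) ->
  0 <= s <= t -> (forall x, s <= x <= t -> 0 < x -> df x <= M) ->
  f t - f s <= M*(t-s).
Proof.
  intros Hd Hc Hst Hb.
  destruct (Req_dec s t) as [E|Ne].
  { subst. replace (t - t) with 0 by ring. lra. }
  assert (Hin : forall s', 0 < s' -> s <= s' <= t -> f t - f s' <= M*(t-s')).
  { intros s' H0 Hs'. destruct (mvt_pos f df s' t Hd ltac:(lra)) as [c [Hc1 Hc2]].
    rewrite Hc2. specialize (Hb c ltac:(lra) ltac:(lra)). nra. }
  destruct (Rlt_or_le 0 s) as [Hs|Hs].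
  { apply Hin; lra. }
  assert (s = 0) by lra. subst s.
  destruct (Rle_or_lt (f t - f 0) (M*(t-0))) as [H|H]; auto.
  set (d := ((f t - f 0) - M*(t-0))/2).
  assert (Hdp : 0 < d) by (unfold d; lra).
  destruct (rc_small f t d ltac:(lra) Hdp M Hc) as [s' [Hs1 [Hs2 Hs3]]].
  specialize (Hin s' ltac:(lra) ltac:(lra)).
  apply Rabs_def2 in Hs2. destruct Hs2.
  pose proof (Rle_abs M). pose proof (Rabs_maj2 M).
  assert (-(M*s') < d) by nra.
  assert (Hdd : 2*d = (f t - f 0) - M*(t-0)) by (unfold d; lra). clearbody d. lra.
Qed.

Lemma mvt_sol_low (f df : R -> R) (m s t : R) :
  (forall x, 0 < x -> is_derive f x (df x)) ->
  filterlim f (at_right 0) (locally (f 0)) ->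
  0 <= s <= t -> (forall x, s <= x <= t -> 0 < x -> m <= df x) ->
  m*(t-s) <= f t - f s.
Proof.
  intros Hd Hc Hst Hb.
  destruct (Req_dec s t) as [E|Ne].
  { subst. replace (t - t) with 0 by ring. lra. }
  assert (Hin : forall s', 0 < s' -> s <= s' <= t -> m*(t-s') <= f t - f s').
  { intros s' H0 Hs'. destruct (mvt_pos f df s' t Hd ltac:(lra)) as [c [Hc1 Hc2]].
    rewrite Hc2. specialize (Hb c ltac:(lra) ltac:(lra)). nra. }
  destruct (Rlt_or_le 0 s) as [Hs|Hs].
  { apply Hin; lra. }
  assert (s = 0) by lra. subst s.
  destruct (Rle_or_lt (m*(t-0)) (f t - f 0)) as [H|H]; auto.
  set (d := (m*(t-0) - (f t - f 0))/2).
  assert (Hdp : 0 < d) by (unfold d; lra).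
  destruct (rc_small f t d ltac:(lra) Hdp m Hc) as [s' [Hs1 [Hs2 Hs3]]].
  specialize (Hin s' ltac:(lra) ltac:(lra)).
  apply Rabs_def2 in Hs2. destruct Hs2.
  pose proof (Rle_abs m). pose proof (Rabs_maj2 m).
  assert (m*s' < d) by nra.
  assert (Hdd : 2*d = m*(t-0) - (f t - f 0)) by (unfold d; lra). clearbody d. lra.
Qed.

Lemma V_deriv (k rho beta alpha : R) (p q : R -> R) (t : R) :
  k = beta*alpha*rho ->
  is_derive p t (fp rho (p t) (q t)) ->
  is_derive q t (fq beta alpha rho (p t) (q t)) ->
  is_derive (fun t => k*(exp (p t) - 1 - p t) + q t * q t / 2) t
    (- (k*rho) * (exp (p t) - 1)^2).
Proof.
  intros Hk Hp Hq.
  set (dp := fp rho (p t) (q t)) in *.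
  set (dq := fq beta alpha rho (p t) (q t)) in *.
  assert (e1 : is_derive (fun t => exp (p t)) t (dp * exp (p t))).
  { exact (is_derive_comp exp p t (exp (p t)) dp (is_derive_exp _) Hp). }
  assert (e2 : is_derive (fun t => exp (p t) - 1 - p t) t (dp * exp (p t) - 0 - dp)).
  { exact (is_derive_minus _ _ _ _ _ (is_derive_minus _ _ _ _ _ e1 (is_derive_const 1 t)) Hp). }
  assert (e3 : is_derive (fun t => k*(exp (p t) - 1 - p t)) t (k*(dp * exp (p t) - 0 - dp))).
  { exact (is_derive_scal _ _ _ _ e2). }
  assert (e4 : is_derive (fun t => q t * q t) t (dq * q t + q t * dq)).
  { exact (is_derive_mult _ _ _ _ _ Hq Hq Rmult_comm). }
  assert (e5 : is_derive (fun t => /2 * (q t * q t)) t (/2 * (dq * q t + q t * dq))).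
  { exact (is_derive_scal _ _ _ _ e4). }
  assert (e6 := is_derive_plus _ _ _ _ _ e3 e5).
  replace (- (k*rho) * (exp (p t) - 1)^2) with
    (plus (k*(dp * exp (p t) - 0 - dp)) (/2 * (dq * q t + q t * dq))).
  - refine (is_derive_ext _ _ _ _ _ e6). intros u. simpl. unfold plus; simpl. field.
  - unfold plus; simpl. unfold dp, dq, fp, fq. rewrite Hk. field.
Qed.

Lemma abs_le_inv (x b : R) : Rabs x <= b -> -b <= x <= b.
Proof. unfold Rabs; destruct (Rcase_abs x); lra. Qed.

Lemma E_nonneg (p : R) : 0 <= exp p - 1 - p.
Proof. pose proof (exp_ineq1_le p). lra. Qed.

Lemma E_lower (p : R) : -2 <= p -> p^2/4 <= exp p - 1 - p.
Proof.
  intros H. assert (Hs : exp p = exp (p/2) * exp (p/2)) by (rewrite <- exp_plus; f_equal; field).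
  pose proof (exp_ineq1_le (p/2)). nra.
Qed.

Lemma E_lower2 (p : R) : p <= -2 -> 1 <= exp p - 1 - p.
Proof. pose proof (exp_pos p). lra. Qed.

Lemma exp_inv_ineq (p : R) : exp p * (1 - p) <= 1.
Proof.
  assert (H : exp p * exp (-p) = 1) by (rewrite <- exp_plus; replace (p + -p) with 0 by ring; apply exp_0).
  pose proof (exp_ineq1_le (-p)). pose proof (exp_pos p). nra.
Qed.

Lemma E_upper (p : R) : Rabs p <= 1/2 -> exp p - 1 - p <= 2 * p^2.
Proof.
  intros H. pose proof (exp_inv_ineq p). apply abs_le_inv in H.
  pose proof (exp_pos p). nra.
Qed.

Lemma exp_near (p : R) : Rabs p <= 1/2 -> Rabs (exp p - 1) <= 2 * Rabs p.
Proof.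
  intros H. pose proof (exp_inv_ineq p). pose proof (exp_ineq1_le p).
  pose proof (exp_pos p). apply abs_le_inv in H.
  assert (exp p <= 2) by nra.
  destruct (Rle_or_lt 0 p).
  - rewrite Rabs_right by lra. rewrite Rabs_right by lra. nra.
  - rewrite (Rabs_left p) by lra. unfold Rabs; destruct (Rcase_abs _); nra.
Qed.

Lemma exp_gap (a x : R) : 0 < a -> a <= Rabs x -> (1 - exp (-a))^2 <= (exp x - 1)^2.
Proof.
  intros Ha Hx.
  assert (H : exp a * exp (-a) = 1) by (rewrite <- exp_plus; replace (a + -a) with 0 by ring; apply exp_0).
  assert (Hm : exp (-a) < 1) by (rewrite <- exp_0; apply exp_increasing; lra).
  pose proof (exp_pos a). pose proof (exp_pos (-a)).
  assert (Hg : 1 - exp (-a) <= exp a - 1) by nra.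
  destruct (Rle_or_lt 0 x).
  - rewrite Rabs_right in Hx by lra.
    assert (exp a <= exp x) by (destruct Hx as [Hx|Hx]; [left; apply exp_increasing; auto| subst; lra]).
    nra.
  - rewrite Rabs_left in Hx by lra.
    assert (exp x <= exp (-a)) by (destruct (Rle_lt_or_eq_dec x (-a)) as [Hy|Hy]; [lra| left; apply exp_increasing; auto| subst; lra]).
    pose proof (exp_pos x). nra.
Qed.

Lemma V_cont (k : R) (p q : R -> R) :
  filterlim p (at_right 0) (locally (p 0)) ->
  filterlim q (at_right 0) (locally (q 0)) ->
  filterlim (fun t => k*(exp (p t) - 1 - p t) + q t * q t / 2) (at_right 0)
    (locally (k*(exp (p 0) - 1 - p 0) + q 0 * q 0 / 2)).
Proof.
  intros Hp Hq.
  assert (HA : filterlim (fun t => k*(exp (p t) - 1 - p t)) (at_right 0) (locally (k*(exp (p 0) - 1 - p 0)))).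
  { apply (filterlim_comp _ _ _ p (fun x => k*(exp x - 1 - x)) _ _ _ Hp).
    apply (ex_derive_continuous (fun x => k*(exp x - 1 - x))). auto_derive. auto. }
  assert (HB : filterlim (fun t => q t * q t / 2) (at_right 0) (locally (q 0 * q 0 / 2))).
  { apply (filterlim_comp _ _ _ q (fun x => x * x / 2) _ _ _ Hq).
    apply (ex_derive_continuous (fun x => x * x / 2)). auto_derive. auto. }
  exact (filterlim_comp_2 _ _ plus HA HB (filterlim_plus _ _)).
Qed.

Lemma exp_le (x y : R) : x <= y -> exp x <= exp y.
Proof. intros [H|H]; [left; now apply exp_increasing | right; now subst]. Qed.

Definition Vf (k : R) (p q : R -> R) (t : R) := k*(exp (p t) - 1 - p t) + q t * q t / 2.

Lemma mul_le_div (x y z : R) : 0 < z -> x <= y / z -> x * z <= y.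
Proof. intros Hz H. apply (Rmult_le_compat_r z) in H; [|lra].
  replace (y / z * z) with y in H by (field; lra). exact H. Qed.

Lemma sol_facts (beta alpha rho : R) (p q : R -> R) :
  0 < beta -> 0 < alpha < 1 -> 0 < rho -> is_solution beta alpha rho p q ->
  let k := beta*alpha*rho in
  (forall s t, 0 <= s <= t -> Vf k p q t <= Vf k p q s) /\
  (forall s t c, 0 <= s <= t -> (forall x, s <= x <= t -> 0 < x -> c <= (exp (p x) - 1)^2) ->
     Vf k p q t - Vf k p q s <= -(k*rho*c)*(t-s)).
Proof.
  intros Hb Ha Hr [Hd [Hp Hq]] k.
  assert (Hk : 0 < k) by (unfold k; apply Rmult_lt_0_compat; [apply Rmult_lt_0_compat|]; lra).
  assert (HD : forall x, 0 < x -> is_derive (Vf k p q) x ((fun x => -(k*rho)*(exp (p x) - 1)^2) x)).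
  { intros x Hx. destruct (Hd x Hx) as [H1 H2]. exact (V_deriv k rho beta alpha p q x eq_refl H1 H2). }
  assert (HC : filterlim (Vf k p q) (at_right 0) (locally (Vf k p q 0))) by exact (V_cont k p q Hp Hq).
  split.
  - intros s t Hst. pose proof (mvt_sol_up _ _ 0 s t HD HC Hst).
    assert (Vf k p q t - Vf k p q s <= 0 * (t - s)); [|lra].
    apply H. intros x _ _. cbv beta. pose proof (pow2_ge_0 (exp (p x) - 1)). assert (0 < k*rho) by nra. nra.
  - intros s t c Hst Hc. apply (mvt_sol_up _ _ _ s t HD HC Hst).
    intros x Hx Hx0. cbv beta. specialize (Hc x Hx Hx0). assert (0 < k*rho) by nra. nra.
Qed.

Lemma V_bounds (k : R) (p q : R -> R) (t C : R) : 0 < k -> Vf k p q t <= C ->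
  q t * q t <= 2*C /\ p t <= 1 + C/k /\ Rabs (q t) <= 1 + 2*C /\ 0 <= C.
Proof.
  intros Hk H. unfold Vf in H. pose proof (E_nonneg (p t)).
  assert (0 <= k*(exp (p t) - 1 - p t)) by (apply Rmult_le_pos; lra).
  assert (Hq : q t * q t <= 2*C) by lra.
  split; [exact Hq|]. split.
  - destruct (Rle_or_lt (p t) (-2)).
    + assert (0 <= C/k) by (apply Rdiv_le_0_compat; nra). lra.
    + pose proof (E_lower (p t) ltac:(lra)).
      assert (p t - 1 <= exp (p t) - 1 - p t) by (pose proof (pow2_ge_0 (p t / 2 - 1)); nra).
      assert (k*(p t - 1) <= k*(exp (p t) - 1 - p t)) by (apply Rmult_le_compat_l; lra).
      assert (0 <= q t * q t) by nra.
      assert (k*(p t - 1) <= C) by lra.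
      assert (p t - 1 <= C/k); [|lra].
      apply (Rmult_le_reg_r k); auto. replace (C/k*k) with C by (field; lra). lra.
  - split; [|nra]. unfold Rabs; destruct (Rcase_abs (q t)); nra.
Qed.

Lemma p_lipschitz (beta alpha rho : R) (p q : R -> R) (B : R) :
  is_solution beta alpha rho p q ->
  (forall x, 0 < x -> Rabs (fp rho (p x) (q x)) <= B) ->
  forall s t, 0 <= s <= t -> Rabs (p t - p s) <= B * (t - s).
Proof.
  intros [Hd [Hp Hq]] HB s t Hst.
  assert (HD : forall x, 0 < x -> is_derive p x ((fun x => fp rho (p x) (q x)) x)).
  { intros x Hx. exact (proj1 (Hd x Hx)). }
  pose proof (mvt_sol_up _ _ B s t HD Hp Hst (fun x _ Hx => proj2 (abs_le_inv _ _ (HB x Hx)))).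
  pose proof (mvt_sol_low _ _ (-B) s t HD Hp Hst (fun x _ Hx => proj1 (abs_le_inv _ _ (HB x Hx)))).
  apply Rabs_le. lra.
Qed.

Lemma q_lipschitz (beta alpha rho : R) (p q : R -> R) (B : R) (T : R) :
  is_solution beta alpha rho p q ->
  (forall x, T <= x -> 0 < x -> Rabs (fq beta alpha rho (p x) (q x)) <= B) ->
  forall s t, 0 <= s <= t -> T <= s -> Rabs (q t - q s) <= B * (t - s).
Proof.
  intros [Hd [Hp Hq]] HB s t Hst HT.
  assert (HD : forall x, 0 < x -> is_derive q x ((fun x => fq beta alpha rho (p x) (q x)) x)).
  { intros x Hx. exact (proj2 (Hd x Hx)). }
  destruct (Req_dec s t) as [E|Ne].
  { subst. replace (t-t) with 0 by ring. rewrite Rminus_diag, Rabs_R0. lra. }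
  pose proof (mvt_sol_up _ _ B s t HD Hq Hst (fun x Hx Hx0 => proj2 (abs_le_inv _ _ (HB x ltac:(lra) Hx0)))).
  pose proof (mvt_sol_low _ _ (-B) s t HD Hq Hst (fun x Hx Hx0 => proj1 (abs_le_inv _ _ (HB x ltac:(lra) Hx0)))).
  apply Rabs_le. lra.
Qed.

Lemma conv (beta alpha rho : R) (p q : R -> R) :
  0 < beta -> 0 < alpha < 1 -> 0 < rho -> is_solution beta alpha rho p q ->
  is_lim p p_infty 0 /\ is_lim q p_infty 0.
Proof.
  intros Hb Ha Hr Hs.
  destruct (sol_facts beta alpha rho p q Hb Ha Hr Hs) as [Hmono Hdrop].
  set (k := beta*alpha*rho) in *.
  assert (Hk : 0 < k) by (unfold k; apply Rmult_lt_0_compat; [apply Rmult_lt_0_compat|]; lra).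
  set (C := Vf k p q 0).
  assert (HVb : forall t, 0 <= t -> Vf k p q t <= C) by (intros t Ht; apply Hmono; lra).
  assert (HVnn : forall t, 0 <= Vf k p q t).
  { intros t. unfold Vf. pose proof (E_nonneg (p t)).
    assert (0 <= k*(exp (p t) - 1 - p t)) by (apply Rmult_le_pos; lra).
    assert (0 <= q t * q t) by nra. lra. }
  assert (HC0 : 0 <= C) by apply HVnn.
  set (P := 1 + C/k).
  set (B := rho*(1+exp P) + (1+2*C)).
  assert (HB : forall x, 0 < x -> Rabs (fp rho (p x) (q x)) <= B).
  { intros x Hx. destruct (V_bounds k p q x C Hk (HVb x ltac:(lra))) as [_ [Hpx [Hqx _]]].
    pose proof (exp_le (p x) P Hpx). pose proof (exp_pos (p x)).
    assert (rho * exp (p x) <= rho * exp P) by (apply Rmult_le_compat_l; lra).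
    assert (0 <= rho * exp (p x)) by (apply Rmult_le_pos; lra).
    apply abs_le_inv in Hqx. unfold fp, B. apply Rabs_le. lra. }
  assert (HBpos : 0 < B).
  { unfold B. pose proof (exp_pos P). assert (0 < rho*(1+exp P)) by (apply Rmult_lt_0_compat; lra). lra. }
  pose proof (p_lipschitz beta alpha rho p q B Hs HB) as Hlip.
  assert (Hcau : forall eps, 0 < eps -> exists t1, 0 <= t1 /\
            forall s t, t1 <= s <= t -> Vf k p q s - Vf k p q t < eps).
  { set (E := fun x => exists t, 0 <= t /\ x = - Vf k p q t).
    destruct (completeness E) as [m [Hub Hlub]].
    - exists 0. intros x [t [Ht ->]]. specialize (HVnn t). lra.
    - exists (- Vf k p q 0). exists 0. split; [lra|reflexivity].
    - intros eps He.
      destruct (classic (exists t1, 0 <= t1 /\ m - eps < - Vf k p q t1)) as [[t1 [Ht1 Hlt]]|Hno].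
      + exists t1. split; auto. intros s t Hst.
        assert (Vf k p q s <= Vf k p q t1) by (apply Hmono; lra).
        assert (- Vf k p q t <= m) by (apply Hub; exists t; split; [lra|reflexivity]). lra.
      + exfalso. assert (m <= m - eps); [|lra]. apply Hlub. intros x [t [Ht ->]].
        destruct (Rle_or_lt (- Vf k p q t) (m - eps)) as [H|H]; auto.
        exfalso. apply Hno. exists t. split; auto. }
  assert (HA : forall eta, 0 < eta -> exists T, 0 <= T /\ forall t, T < t -> Rabs (p t) < eta).
  { intros eta He.
    set (a := eta/2). set (h := eta/(2*B)). set (g := (1 - exp (-a))^2).
    assert (Haeq : a = eta/2) by reflexivity.
    assert (Ha0 : 0 < a) by (unfold a; lra).
    assert (Hg : 0 < g).
    { unfold g. assert (exp (-a) < 1) by (rewrite <- exp_0; apply exp_increasing; lra).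
      apply pow_lt. lra. }
    assert (Hh : 0 < h) by (unfold h; apply Rdiv_lt_0_compat; lra).
    assert (HBh : B * h = a) by (unfold h, a; field; lra).
    assert (Hkrg : 0 < k*rho*g) by (apply Rmult_lt_0_compat; [apply Rmult_lt_0_compat|]; lra).
    destruct (Hcau (k*rho*g*h) ltac:(apply Rmult_lt_0_compat; lra)) as [t1 [Ht1 Hc]].
    exists t1. split; auto. intros t Ht.
    destruct (Rlt_or_le (Rabs (p t)) eta) as [|Hge]; auto. exfalso.
    assert (Hd := Hdrop t (t+h) g ltac:(lra)).
    assert (Hd' : Vf k p q (t + h) - Vf k p q t <= - (k * rho * g) * (t + h - t)).
    { apply Hd. intros x Hx Hx0. apply exp_gap; auto.
      pose proof (Hlip t x ltac:(lra)).
      assert (B*(x-t) <= B*h) by (apply Rmult_le_compat_l; lra).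
      pose proof (Rabs_triang (p x) (p t - p x)).
      replace (p x + (p t - p x)) with (p t) in H1 by ring.
      rewrite Rabs_minus_sym in H1. lra. }
    specialize (Hc t (t+h) ltac:(lra)).
    replace (t + h - t) with h in Hd' by ring. nra. }
  split.
  - apply is_lim_spec. intros eps. simpl.
    destruct (HA eps (cond_pos eps)) as [T [_ HT]]. exists T. intros x Hx.
    rewrite Rminus_0_r. auto.
  - apply is_lim_spec. intros [e He]. simpl.
    set (a := Rmin (1/2) (Rmin (e/8) (e/(8*(rho+k))))).
    assert (Ha0 : 0 < a).
    { unfold a. repeat apply Rmin_pos; try lra. apply Rdiv_lt_0_compat; lra. }
    assert (Ha1 : a <= 1/2) by apply Rmin_l.
    assert (Ha2 : a <= e/8) by (unfold a; eapply Rle_trans; [apply Rmin_r| apply Rmin_l]).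
    assert (Ha3 : a * (8*(rho+k)) <= e).
    { apply mul_le_div; [lra|]. unfold a; eapply Rle_trans; [apply Rmin_r| apply Rmin_r]. }
    destruct (HA a Ha0) as [T [HT0 HT]].
    exists T. intros t0 Ht0. rewrite Rminus_0_r.
    destruct (Rlt_or_le (Rabs (q t0)) e) as [|Hge]; auto. exfalso.
    assert (Hexp : forall x, T < x -> Rabs (exp (p x) - 1) <= 2*a).
    { intros x Hx. specialize (HT x Hx).
      pose proof (exp_near (p x) ltac:(lra)). lra. }
    assert (Hfq : forall x, t0 <= x -> 0 < x -> Rabs (fq beta alpha rho (p x) (q x)) <= k*(2*a)).
    { intros x Hx _. unfold fq. rewrite Rabs_Ropp, Rabs_mult. fold k.
      rewrite (Rabs_right k) by lra. rewrite Rabs_minus_sym.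
      apply Rmult_le_compat_l; [lra|]. apply Hexp. lra. }
    pose proof (q_lipschitz beta alpha rho p q (k*(2*a)) t0 Hs Hfq) as Hql.
    destruct Hs as [Hd [Hp Hq]].
    assert (HDp : forall x, 0 < x -> is_derive p x ((fun x => fp rho (p x) (q x)) x)).
    { intros x Hx. exact (proj1 (Hd x Hx)). }
    assert (Hfacts : forall x, t0 <= x <= t0 + 1 ->
       - (rho*(2*a)) <= rho*(1 - exp (p x)) <= rho*(2*a) /\ Rabs (q x - q t0) <= k*(2*a)).
    { intros x Hx. pose proof (abs_le_inv _ _ (Hexp x ltac:(lra))).
      split.
      - split.
        + assert (rho*(exp (p x) - 1) <= rho*(2*a)) by (apply Rmult_le_compat_l; lra). lra.
        + assert (- (rho*(2*a)) <= rho*(exp (p x) - 1)).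
          { replace (- (rho*(2*a))) with (rho * (-(2*a))) by ring. apply Rmult_le_compat_l; lra. }
          lra.
      - pose proof (Hql t0 x ltac:(lra) ltac:(lra)).
        assert (k*(2*a)*(x-t0) <= k*(2*a)*1) by (apply Rmult_le_compat_l; [nra|lra]). lra. }
    pose proof (HT t0 Ht0) as Hp0. pose proof (HT (t0+1) ltac:(lra)) as Hp1.
    apply Rabs_def2 in Hp0. apply Rabs_def2 in Hp1.
    destruct (Rle_or_lt 0 (q t0)) as [Hq0|Hq0].
    + rewrite Rabs_right in Hge by lra.
      pose proof (mvt_sol_up _ _ (-(3*e/4)) t0 (t0+1) HDp Hp ltac:(lra)) as Hm.
      assert (p (t0+1) - p t0 <= - (3*e/4) * (t0 + 1 - t0)); [|lra].
      apply Hm. intros x Hx _. cbv beta. destruct (Hfacts x Hx) as [[H1 H2] H3].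
      apply abs_le_inv in H3. unfold fp. lra.
    + rewrite Rabs_left in Hge by lra.
      pose proof (mvt_sol_low _ _ (3*e/4) t0 (t0+1) HDp Hp ltac:(lra)) as Hm.
      assert (3*e/4 * (t0 + 1 - t0) <= p (t0+1) - p t0); [|lra].
      apply Hm. intros x Hx _. cbv beta. destruct (Hfacts x Hx) as [[H1 H2] H3].
      apply abs_le_inv in H3. unfold fp. lra.
Qed.

Theorem theorem6p1 (beta alpha rho : R) :
  0 < beta -> 0 < alpha < 1 -> 0 < rho ->
  (forall eps, 0 < eps -> exists delta, 0 < delta /\
     forall p q : R -> R, is_solution beta alpha rho p q ->
       norm2 (p 0) (q 0) < delta ->
       forall t, 0 <= t -> norm2 (p t) (q t) < eps) /\
  (forall p q : R -> R, is_solution beta alpha rho p q ->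
     is_lim p p_infty 0 /\ is_lim q p_infty 0).
Proof.
  intros Hb Ha Hr. split.
  2: { intros p q Hs. exact (conv beta alpha rho p q Hb Ha Hr Hs). }
  intros eps He.
  set (k := beta*alpha*rho).
  assert (Hk : 0 < k) by (unfold k; apply Rmult_lt_0_compat; [apply Rmult_lt_0_compat|]; lra).
  set (c := Rmin (Rmin (k*eps^2/8) (eps^2/4)) (k/2)).
  assert (He2 : 0 < eps^2) by (apply pow_lt; lra).
  assert (Hc0 : 0 < c).
  { unfold c. repeat apply Rmin_pos; try lra. apply Rdiv_lt_0_compat; [|lra]. apply Rmult_lt_0_compat; lra. }
  assert (Hc1 : c <= k*eps^2/8) by (unfold c; eapply Rle_trans; [apply Rmin_l| apply Rmin_l]).
  assert (Hc2 : c <= eps^2/4) by (unfold c; eapply Rle_trans; [apply Rmin_l| apply Rmin_r]).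
  assert (Hc3 : c <= k/2) by (unfold c; apply Rmin_r).
  set (delta := Rmin (1/2) (c/(2*k+1))).
  assert (Hd0 : 0 < delta).
  { unfold delta. apply Rmin_pos; [lra|]. apply Rdiv_lt_0_compat; lra. }
  assert (Hd1 : delta <= 1/2) by apply Rmin_l.
  assert (Hd2 : delta * (2*k+1) <= c).
  { apply mul_le_div; [lra|]. apply Rmin_r. }
  exists delta. split; auto.
  intros p q Hs Hn t Ht.
  destruct (sol_facts beta alpha rho p q Hb Ha Hr Hs) as [Hmono _]. fold k in Hmono.
  unfold norm2 in *.
  set (x0 := p 0 ^ 2 + q 0 ^ 2) in Hn.
  assert (Hx0 : 0 <= x0) by (unfold x0; pose proof (pow2_ge_0 (p 0)); pose proof (pow2_ge_0 (q 0)); lra).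
  assert (Hx0d : x0 < delta^2).
  { pose proof (sqrt_sqrt x0 Hx0). pose proof (sqrt_pos x0). nra. }
  assert (Hp0 : Rabs (p 0) <= 1/2).
  { assert (p 0 ^2 <= 1/4) by (unfold x0 in Hx0d; pose proof (pow2_ge_0 (q 0)); nra).
    apply Rabs_le. split; nra. }
  pose proof (E_upper (p 0) Hp0).
  assert (HV0 : Vf k p q 0 < c).
  { unfold Vf.
    assert (k*(exp (p 0) - 1 - p 0) <= k*(2*p 0^2)) by (apply Rmult_le_compat_l; lra).
    assert (delta^2 <= delta) by nra.
    assert ((2*k+1) * x0 < (2*k+1) * delta^2) by (apply Rmult_lt_compat_l; lra).
    assert ((2*k+1) * delta^2 <= (2*k+1) * delta) by (apply Rmult_le_compat_l; lra).
    unfold x0 in *. pose proof (pow2_ge_0 (p 0)). nra. }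
  assert (HVt : Vf k p q t < c) by (pose proof (Hmono 0 t ltac:(lra)); lra).
  unfold Vf in HVt. pose proof (E_nonneg (p t)).
  assert (0 <= k*(exp (p t) - 1 - p t)) by (apply Rmult_le_pos; lra).
  assert (Hq2 : q t ^ 2 < eps^2/2) by nra.
  assert (Hp2 : p t ^ 2 < eps^2/2).
  { destruct (Rle_or_lt (p t) (-2)) as [Hle|Hlt].
    - pose proof (E_lower2 (p t) Hle).
      assert (k*1 <= k*(exp (p t) - 1 - p t)) by (apply Rmult_le_compat_l; lra).
      assert (0 <= q t * q t) by nra. lra.
    - pose proof (E_lower (p t) ltac:(lra)).
      assert (k*(p t^2/4) <= k*(exp (p t) - 1 - p t)) by (apply Rmult_le_compat_l; lra).
      assert (0 <= q t * q t) by nra. nra. }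
  rewrite <- (sqrt_pow2 eps) by lra.
  apply sqrt_lt_1.
  - pose proof (pow2_ge_0 (p t)); pose proof (pow2_ge_0 (q t)); lra.
  - lra.
  - lra.
Qed.
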